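(* Let $\kappa>0$, let $x_1=x_1(\kappa)$ be a real differentiable function of $\kappa$, let $a\neq0$, $b$ be real constants, and set $$\Theta=\kappa(x+x_1+4\kappa^2t),\qquad \gamma=x+x_1+\kappa\,\frac{d x_1}{d\kappa}+(12\kappa^2+2a)t+2b .$$ Then, on the set where $2\kappa\gamma-\sin2\Theta\neq0$, the functions $$u=2\partial_x^2\ln(2\kappa\gamma-\sin2\Theta)=\frac{32\kappa^2\sin\Theta(\kappa\gamma\cos\Theta-\sin\Theta)}{(2\kappa\gamma-\sin2\Theta)^2},\qquad \varphi_1=\frac{4\kappa\sqrt a\,\sin\Theta}{2\kappa\gamma-\sin2\Theta}$$ solve the KdV equation with one self-consistent source $$u_t+6uu_x+u_{xxx}+4\varphi_1\varphi_{1,x}=0,\qquad \varphi_{1,xx}+(\kappa^2+u)\varphi_1=0$$ (here $\lambda_1=\kappa^2$ and $\sqrt a$ is any fixed square root of $a$).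
   Context: This is the solution obtained from the generalized binary Darboux transformation applied to $u=0$ with $f=\sin\Theta$ (a solution of $f_{xx}+\kappa^2f=0$, $f_t=4\kappa^2 f_x$) and $e(t)=at+b$. *)

(* Defs.v *)
From Stdlib Require Import Reals.
From Coquelicot Require Import Coquelicot.
Open Scope R_scope.

Definition Theta (kappa x1v t x : R) : R := kappa * (x + x1v + 4 * kappa ^ 2 * t).

(* gamma = x + x1 + kappa dx1/dkappa + (12 kappa^2 + 2a) t + 2b,
   with x1v = x1(kappa), dx1v = x1'(kappa) *)
Definition gamma (kappa x1v dx1v a b t x : R) : R :=
  x + x1v + kappa * dx1v + (12 * kappa ^ 2 + 2 * a) * t + 2 * b.

Definition Den (kappa x1v dx1v a b t x : R) : R :=
  2 * kappa * gamma kappa x1v dx1v a b t x - sin (2 * Theta kappa x1v t x).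

Definition u_sol (kappa x1v dx1v a b t x : R) : R :=
  32 * kappa ^ 2 * sin (Theta kappa x1v t x)
  * (kappa * gamma kappa x1v dx1v a b t x * cos (Theta kappa x1v t x)
     - sin (Theta kappa x1v t x))
  / (Den kappa x1v dx1v a b t x) ^ 2.

(* phi1 = 4 kappa sqrt(a) sin Theta / Den, with sqrt(a) = s any complex
   number with s^2 = a (complex-valued in general, real when a > 0 and s real) *)
Definition phi1_sol (kappa x1v dx1v a b : R) (s : C) (t x : R) : C :=
  Cmult s (RtoC (4 * kappa * sin (Theta kappa x1v t x) / Den kappa x1v dx1v a b t x)).

(* Main.v *)
Require Import Defs.
From Stdlib Require Import Reals Lra Lia Nsatz.
From Coquelicot Require Import Coquelicot.
Open Scope R_scope.

Section S.
Variables k X dX a b : R.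
Definition th t x := Theta k X t x.
Definition DD t x := Den k X dX a b t x.
Definition s2 t x := sin (2 * th t x).
Definition c2 t x := cos (2 * th t x).
Definition D1 t x := 2*k*(1 - c2 t x).
Definition D2 t x := 4*k^2*s2 t x.
Definition D3 t x := 8*k^3*c2 t x.
Definition D4 t x := -16*k^4*s2 t x.
Definition D5 t x := -32*k^5*c2 t x.
Definition Dt t x := 24*k^3 + 4*a*k - 8*k^3*c2 t x.
Definition D1t t x := 16*k^4*s2 t x.
Definition D2t t x := 32*k^5*c2 t x.
Definition uF t x := 2*(D2 t x/DD t x - D1 t x^2/DD t x^2).
Definition utF t x := 2*(D2t t x/DD t x - D2 t x*Dt t x/DD t x^2 - 2*D1 t x*D1t t x/DD t x^2 + 2*D1 t x^2*Dt t x/DD t x^3).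
Definition uxF t x := 2*(D3 t x/DD t x - 3*D1 t x*D2 t x/DD t x^2 + 2*D1 t x^3/DD t x^3).
Definition uxxF t x := 2*(D4 t x/DD t x - 4*D1 t x*D3 t x/DD t x^2 - 3*D2 t x^2/DD t x^2 + 12*D1 t x^2*D2 t x/DD t x^3 - 6*D1 t x^4/DD t x^4).
Definition uxxxF t x := 2*(D5 t x/DD t x - 5*D1 t x*D4 t x/DD t x^2 - 10*D2 t x*D3 t x/DD t x^2 + 20*D1 t x^2*D3 t x/DD t x^3 + 30*D1 t x*D2 t x^2/DD t x^3 - 60*D1 t x^3*D2 t x/DD t x^4 + 24*D1 t x^5/DD t x^5).
Definition fF t x := 4*k*sin (th t x)/DD t x.
Definition fxF t x := 4*k*(k*cos (th t x)/DD t x - sin (th t x)*D1 t x/DD t x^2).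
Definition fxxF t x := 4*k*(-k^2*sin (th t x)/DD t x - 2*k*cos (th t x)*D1 t x/DD t x^2 - sin (th t x)*D2 t x/DD t x^2 + 2*sin (th t x)*D1 t x^2/DD t x^3).

Ltac nzc HD := first [exact I | split; nzc HD | apply Rmult_integral_contrapositive_currified; nzc HD | (intro Hc; apply HD; lra)].
Ltac dtac := intros t x HD; unfold uF, utF, uxF, uxxF, uxxxF, fF, fxF, fxxF, D1,D2,D3,D4,D5,Dt,D1t,D2t,s2,c2,th,DD,Den,gamma,Theta in *;
  cbn [pow] in *; auto_derive; rewrite ?Rmult_1_r in *;
  set (S := sin (2*(k*(x+X+4*(k*k)*t)))) in *; set (C := cos (2*(k*(x+X+4*(k*k)*t)))) in *;
  set (S1 := sin ((k*(x+X+4*(k*k)*t)))) in *; set (C1 := cos ((k*(x+X+4*(k*k)*t)))) in *;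
  set (G := (x + X + k*dX + (12*(k*k)+2*a)*t + 2*b)) in *;
  [nzc HD | field; nzc HD].

Lemma d_ux t x : DD t x <> 0 -> is_derive (fun y => uF t y) x (uxF t x).
Proof. revert t x. Time dtac. Qed.
Lemma d_uxx t x : DD t x <> 0 -> is_derive (fun y => uxF t y) x (uxxF t x).
Proof. revert t x. Time dtac. Qed.
Lemma d_uxxx t x : DD t x <> 0 -> is_derive (fun y => uxxF t y) x (uxxxF t x).
Proof. revert t x. Time dtac. Qed.
Lemma d_ut t x : DD t x <> 0 -> is_derive (fun s => uF s x) t (utF t x).
Proof. revert t x. Time dtac. Qed.
Lemma d_fx t x : DD t x <> 0 -> is_derive (fun y => fF t y) x (fxF t x).
Proof. revert t x. Time dtac. Qed.
Lemma d_fxx t x : DD t x <> 0 -> is_derive (fun y => fxF t y) x (fxxF t x).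
Proof. revert t x. Time dtac. Qed.
Lemma d_D t x : DD t x <> 0 -> is_derive (fun y => DD t y) x (D1 t x).
Proof. revert t x. dtac. Qed.
Lemma d_D1D t x : DD t x <> 0 -> is_derive (fun y => D1 t y / DD t y) x (D2 t x / DD t x - D1 t x ^2 / DD t x ^2).
Proof. revert t x. dtac. Qed.

Lemma d_lnD t x : DD t x <> 0 -> is_derive (fun y => ln (Rabs (DD t y))) x (D1 t x / DD t x).
Proof.
intros HD.
pose proof (is_derive_Rabs _ _ _ (d_D t x HD) HD) as H1.
assert (Hp : 0 < Rabs (DD t x)) by (apply Rabs_pos_lt; exact HD).
pose proof (is_derive_ln _ Hp) as H2.
pose proof (@is_derive_comp _ _ ln (fun y => Rabs (DD t y)) x _ _ H2 H1) as H3.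
replace (D1 t x / DD t x) with (scal (sign (DD t x) * D1 t x) (/ Rabs (DD t x))); [exact H3|].
unfold scal; simpl; unfold mult; simpl.
destruct (Rlt_or_le 0 (DD t x)) as [Hl|Hl].
- rewrite (sign_eq_1 _ Hl), Rabs_right by lra. field; auto.
- assert (Hn : DD t x < 0) by (destruct Hl; [lra| contradiction]).
  rewrite (sign_eq_m1 _ Hn), Rabs_left by lra. field; auto.
Qed.

Ltac atac t x := unfold u_sol, uF, utF, uxF, uxxF, uxxxF, fF, fxF, fxxF, D1,D2,D3,D4,D5,Dt,D1t,D2t,s2,c2,th,DD,Den,gamma,Theta in *;
  rewrite ?sin_2a, ?cos_2a_sin in *;
  set (S := sin (k * (x + X + 4 * k ^ 2 * t))) in *; set (C := cos (k * (x + X + 4 * k ^ 2 * t))) in *;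
  set (G := (x + X + k*dX + (12*k^2+2*a)*t + 2*b)) in *;
  assert (hSC : S * S + C * C = 1) by (rewrite <- (sin2_cos2 (k * (x + X + 4 * k ^ 2 * t))); unfold Rsqr; reflexivity);
  clearbody S C G.

Lemma kdv t x : DD t x <> 0 -> utF t x + 6 * uF t x * uxF t x + uxxxF t x + 4 * a * (fF t x * fxF t x) = 0.
Proof. intro HD. atac t x. field_simplify_eq; [simpl; nsatz | exact HD]. Qed.
Lemma src t x : DD t x <> 0 -> fxxF t x + (k^2 + uF t x) * fF t x = 0.
Proof. intro HD. atac t x. field_simplify_eq; [simpl; nsatz | exact HD]. Qed.
Lemma u_eq t x : u_sol k X dX a b t x = uF t x.
Proof.
destruct (Req_dec (DD t x) 0) as [HD|HD].
- unfold u_sol, uF. change (Den k X dX a b t x) with (DD t x). rewrite HD.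
  unfold Rdiv. rewrite pow_i by lia. rewrite Rinv_0. ring.
- atac t x. field_simplify_eq; [simpl; nsatz | exact HD].
Qed.
End S.

Lemma loc_nz (f : R -> R) x : continuous f x -> f x <> 0 -> locally x (fun y => f y <> 0).
Proof.
intros Hc Hf. apply (Hc (fun z => z <> 0)).
assert (Hp : 0 < Rabs (f x)) by (apply Rabs_pos_lt; exact Hf).
exists (mkposreal _ Hp). intros z Hz Hz0. simpl in Hz.
unfold ball in Hz; simpl in Hz; unfold AbsRing_ball, abs, minus, plus, opp in Hz; simpl in Hz.
rewrite Hz0 in Hz. replace (0 + - f x) with (- f x) in Hz by ring. rewrite Rabs_Ropp in Hz. lra.
Qed.


Lemma cder (s : C) (F : R -> R) x F' : is_derive F x F' ->
  is_derive (fun y => Cmult s (RtoC (F y))) x (Cmult s (RtoC F')).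
Proof.
intros H.
pose proof (@is_derive_scal_l R_AbsRing (prod_NormedModule R_AbsRing R_NormedModule R_NormedModule) F x F' s H) as H2.
eapply is_derive_ext; [| replace (Cmult s (RtoC F')) with (scal F' s); [exact H2|]].
- intros y. destruct s as [s1 s2]. unfold Cmult, RtoC; simpl.
  change (scal (F y) (s1, s2)) with (scal (F y) s1, scal (F y) s2).
  unfold scal; simpl; unfold mult; simpl. apply injective_projections; simpl; ring.
- destruct s as [s1 s2]. unfold Cmult, RtoC; simpl.
  change (scal F' (s1, s2)) with (scal F' s1, scal F' s2).
  unfold scal; simpl; unfold mult; simpl. apply injective_projections; simpl; ring.
Qed.

Theorem mainTheorem3 (kappa : R) (x1 : R -> R) (a b : R) (s : C)
  (hk : 0 < kappa) (hx1 : ex_derive x1 kappa) (ha : a <> 0)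
  (hs : Cmult s s = RtoC a) :
  let u := u_sol kappa (x1 kappa) (Derive x1 kappa) a b in
  let phi1 := phi1_sol kappa (x1 kappa) (Derive x1 kappa) a b s in
  let D := Den kappa (x1 kappa) (Derive x1 kappa) a b in
  exists (ut ux uxx uxxx : R -> R -> R) (phix phixx : R -> R -> C),
  forall t x : R, D t x <> 0 ->
    u t x = 2 * Derive_n (fun y => ln (Rabs (D t y))) 2 x /\
    is_derive (fun s0 => u s0 x) t (ut t x) /\
    is_derive (fun y => u t y) x (ux t x) /\
    is_derive (fun y => ux t y) x (uxx t x) /\
    is_derive (fun y => uxx t y) x (uxxx t x) /\
    is_derive (fun y => phi1 t y) x (phix t x) /\
    is_derive (fun y => phix t y) x (phixx t x) /\
    Cplus (RtoC (ut t x + 6 * u t x * ux t x + uxxx t x))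
          (Cmult (RtoC 4) (Cmult (phi1 t x) (phix t x))) = RtoC 0 /\
    Cplus (phixx t x) (Cmult (RtoC (kappa ^ 2 + u t x)) (phi1 t x)) = RtoC 0.
Proof.
intros u phi1 D.
set (X := x1 kappa) in *. set (dX := Derive x1 kappa) in *. set (k := kappa) in *.
exists (utF k X dX a b), (uxF k X dX a b), (uxxF k X dX a b), (uxxxF k X dX a b),
  (fun t x => Cmult s (RtoC (fxF k X dX a b t x))), (fun t x => Cmult s (RtoC (fxxF k X dX a b t x))).
intros t x HD.
change (D t x) with (DD k X dX a b t x) in HD.
assert (Ueq : forall t y, u t y = uF k X dX a b t y) by (intros; apply u_eq).
split; [|split; [|split; [|split; [|split; [|split; [|split; [|split]]]]]]].
- rewrite Ueq. simpl Derive_n.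
  rewrite (Derive_ext_loc _ (fun y => D1 k X t y / DD k X dX a b t y)).
  + pose proof (is_derive_unique _ _ _ (d_D1D k X dX a b t x HD)) as E. change (Derive (fun y : R => D1 k X t y / DD k X dX a b t y) x = D2 k X t x / DD k X dX a b t x - D1 k X t x ^ 2 / DD k X dX a b t x ^ 2) in E. transitivity (2 * (D2 k X t x / DD k X dX a b t x - D1 k X t x ^ 2 / DD k X dX a b t x ^ 2)); [unfold uF; ring | f_equal; symmetry; exact E].
  + assert (Hc : continuous (fun y => DD k X dX a b t y) x).
    { apply (@ex_derive_continuous R_AbsRing R_NormedModule). eexists. apply d_D; exact HD. }
    pose proof (loc_nz _ _ Hc HD) as L.
    eapply filter_imp; [| exact L]. intros y Hy. simpl in Hy.
    apply is_derive_unique. apply d_lnD. exact Hy.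
- eapply is_derive_ext; [intros; symmetry; apply Ueq|]. apply d_ut; exact HD.
- eapply is_derive_ext; [intros; symmetry; apply Ueq|]. apply d_ux; exact HD.
- apply d_uxx; exact HD.
- apply d_uxxx; exact HD.
- apply cder. apply d_fx; exact HD.
- apply cder. apply d_fxx; exact HD.
- rewrite Ueq. pose proof (kdv k X dX a b t x HD) as K.
  unfold phi1, phi1_sol. change (4 * k * sin (Theta k X t x) / Den k X dX a b t x) with (fF k X dX a b t x).
  destruct s as [s1 s2]. unfold Cmult, Cplus, RtoC in *; simpl in *.
  assert (H1 : s1 * s1 - s2 * s2 = a) by (apply (f_equal fst) in hs; simpl in hs; exact hs).
  assert (H2 : s1 * s2 + s2 * s1 = 0) by (apply (f_equal snd) in hs; simpl in hs; exact hs).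
  apply injective_projections; simpl; nsatz.
- rewrite Ueq. pose proof (src k X dX a b t x HD) as K.
  unfold phi1, phi1_sol. change (4 * k * sin (Theta k X t x) / Den k X dX a b t x) with (fF k X dX a b t x).
  destruct s as [s1 s2]. unfold Cmult, Cplus, RtoC in *; simpl in *.
  apply injective_projections; simpl; nsatz.
Qed.
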